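(* Let $(A,R)$ be a relationally complete cartesian discrete combinatory object, with meet $\wedge:A\times A\to A$, top element $\top\in A$, and generic function $@\in R$ (a partial function). Define the partial application $a\cdot b=@(a\wedge b)$ (associating to the left) and $A_\#=\{a\in A\mid\{(\top,a)\}\in R\}$. Then: (i) for every polynomial $p[x_1,\dots,x_n]$ over $(A,\cdot)$ with coefficients in $A_\#$, the partial function $A^n\rightharpoonup A$, $\vec a\mapsto p[\vec a]$, is in $R^{(n)}$; (ii) for all $n\in\mathbb{N}$ and $r\in R^{(n+1)}$ there is $e\in A_\#$ such that for all $a_1,\dots,a_n,b\in A$: $e\cdot a_1\cdots a_n$ is defined, and whenever $r(a_1,\dots,a_n,b)$ is defined, $e\cdot a_1\cdots a_n\cdot b$ is defined and equal to $r(a_1,\dots,a_n,b)$; (iii) $(A,\cdot,A_\#)$ is a weak relative PCA, and the uniform preorder structure on $A$ consisting of all relations contained in some partial function $(e\cdot -):A\rightharpoonup A$ with $e\in A_\#$ is equal to $R$.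
   Context: A uniform preorder is a pair $(A,R)$ with $A$ a set and $R\subseteq P(A\times A)$ such that $\mathrm{id}_A\in R$, $s\circ r\in R$ whenever $r,s\in R$, and $s\in R$ whenever $r\in R$ and $s\subseteq r$; it is a discrete combinatory object (DCO) if every $r\in R$ is single-valued. Monotone maps $f:(A,R)\to(B,S)$: functions with $\{(fa,fa')\mid(a,a')\in r\}\in S$ for $r\in R$, ordered by $f\le g$ iff $\{(fa,ga)\}\in S$; finite 2-products: terminal singleton, product $(A\times B,R\otimes S)$ with $R\otimes S$ the relations contained in some $r\times s$. $(A,R)$ is cartesian if the terminal projection and diagonal have right adjoints $\top:1\to A$ and $\wedge:A\times A\to A$ (adjunction $f\dashv g$: $\mathrm{id}\le gf$, $fg\le\mathrm{id}$). A cartesian $(A,R)$ is relationally complete if there is $@\in R$ such that for every $r\in R$ there is a total function $\tilde r$ with graph in $R$ satisfying: $(a\wedge b,c)\in r$ implies $(\tilde r(a)\wedge b,c)\in @$ for all $a,b,c$. Define $\wedge^{(0)}(\ast)=\top$ and $\wedge^{(n+1)}(\vec a,b)=\wedge^{(n)}(\vec a)\wedge b$, and $R^{(n)}=\{r\subseteq A^n\times A\mid \exists s\in R.\ r=s\circ\wedge^{(n)}\}$. A polynomial over $(A,\cdot)$ is a term built from variables, constants in $A$ and application; $p[\vec a]$ is its possibly undefined value. A weak relative PCA is a triple $(A,\cdot,A_\#)$ with $\cdot:A\times A\rightharpoonup A$ a partial binary operation and $A_\#\subseteq A$ closed under application (whenever defined) and containing elements $\mathsf{k},\mathsf{s}$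 such that for all $a,b,c\in A$: $\mathsf{k}\cdot a\cdot b$ is defined and equals $a$; $\mathsf{s}\cdot a\cdot b$ is defined; and if $a\cdot c\cdot(b\cdot c)$ is defined then $\mathsf{s}\cdot a\cdot b\cdot c$ is defined and equals it. *)

(* Defs.v *)
From mathcomp Require Import all_boot.
Set Implicit Arguments.
Unset Strict Implicit.
Unset Printing Implicit Defensive.

Definition rel_on (A : Type) := A -> A -> Prop.
Definition relset (A : Type) := rel_on A -> Prop.

Section UP.
Variables A B : Type.

Definition id_rel : rel_on A := fun a b => a = b.
Definition comp_rel (s r : rel_on A) : rel_on A :=
  fun a c => exists b, r a b /\ s b c.
Definition rel_incl (r s : rel_on A) := forall a b, r a b -> s a b.
Definition single_valued (r : rel_on A) := forall a b b', r a b -> r a b' -> b = b'.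
Definition graph (f : A -> A) : rel_on A := fun a b => b = f a.

Definition uniform_preorder (R : relset A) : Prop :=
  [/\ R id_rel,
      (forall r s, R r -> R s -> R (comp_rel s r)) &
      (forall r s, R r -> rel_incl s r -> R s)].

Definition DCO (R : relset A) : Prop :=
  uniform_preorder R /\ (forall r, R r -> single_valued r).

End UP.

Definition monotone (A B : Type) (R : relset A) (S : relset B) (f : A -> B) :=
  forall r, R r -> S (fun b b' => exists a a', [/\ r a a', b = f a & b' = f a']).

Definition fun_le (A B : Type) (S : relset B) (f g : A -> B) :=
  S (fun b b' => exists a, b = f a /\ b' = g a).

Definition adjunction (A B : Type) (R : relset A) (S : relset B)
    (f : A -> B) (g : B -> A) :=
  [/\ monotone R S f, monotone S R g,
      fun_le R id (fun a => g (f a)) & fun_le S (fun b => f (g b)) id].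

Definition terminal_up : relset unit := fun _ => True.

Definition prod_up (A B : Type) (R : relset A) (S : relset B) : relset (A * B) :=
  fun t => exists r s, [/\ R r, S s &
    forall x y, t x y -> r x.1 y.1 /\ s x.2 y.2].

Definition cartesian (A : Type) (R : relset A) (top : A) (meet : A -> A -> A) :=
  adjunction R terminal_up (fun _ => tt) (fun _ => top) /\
  adjunction R (prod_up R R) (fun a => (a, a)) (fun p => meet p.1 p.2).

Definition generic_fun (A : Type) (R : relset A) (meet : A -> A -> A) (gen : rel_on A) :=
  R gen /\
  forall r, R r -> exists f : A -> A, R (graph f) /\
    forall a b c, r (meet a b) c -> gen (meet (f a) b) c.

Definition relationally_complete (A : Type) (R : relset A) (meet : A -> A -> A) :=
  exists gen, generic_fun R meet gen.

Definition wedge_n (A : Type) (top : A) (meet : A -> A -> A) (n : nat)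
    (v : n.-tuple A) : A := foldl meet top v.

Definition Rn (A : Type) (R : relset A) (top : A) (meet : A -> A -> A) (n : nat)
    (r : n.-tuple A -> A -> Prop) : Prop :=
  exists s, R s /\ forall v c, r v c <-> s (wedge_n top meet v) c.

(** partial application  a . b = @(a /\ b), as a (functional) relation:
    [papp meet gen a b c] means  a . b  is defined and equals c. *)
Definition papp (A : Type) (meet : A -> A -> A) (gen : rel_on A) (a b c : A) : Prop :=
  gen (meet a b) c.

Definition sharp (A : Type) (R : relset A) (top : A) (a : A) : Prop :=
  R (fun x y => x = top /\ y = a).

Fixpoint appn (A : Type) (app : A -> A -> A -> Prop) (e : A) (s : seq A) (c : A) : Prop :=
  match s with
  | [::] => c = e
  | a :: s' => exists d, app e a d /\ appn app d s' c
  end.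

Inductive poly (A : Type) (n : nat) : Type :=
  | PVar of 'I_n
  | PConst of A
  | PApp of poly A n & poly A n.

Fixpoint coeffs_in (A : Type) (n : nat) (P : A -> Prop) (p : poly A n) : Prop :=
  match p with
  | PVar _ => True
  | PConst a => P a
  | PApp p q => coeffs_in P p /\ coeffs_in P q
  end.

(** [peval app v p c] : p[v] is defined and equals c. *)
Inductive peval (A : Type) (app : A -> A -> A -> Prop) (n : nat) (v : n.-tuple A)
  : poly A n -> A -> Prop :=
  | ev_var i : peval app v (PVar A i) (tnth v i)
  | ev_const a : peval app v (PConst n a) a
  | ev_app p q a b c :
      peval app v p a -> peval app v q b -> app a b c -> peval app v (PApp p q) c.

Definition weak_rpca (A : Type) (app : A -> A -> A -> Prop) (S : A -> Prop) : Prop :=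
  [/\ (forall a b c c', app a b c -> app a b c' -> c = c'),
      (forall a b c, S a -> S b -> app a b c -> S c) &
      exists k s, [/\ S k, S s &
        forall a b c : A,
          [/\ appn app k [:: a; b] a,
              (exists d, appn app s [:: a; b] d) &
              (forall u w x, app a c u -> app b c w -> app u w x ->
                 appn app s [:: a; b; c] x)]]].

(* Main.v *)
Require Import Defs.
From mathcomp Require Import all_boot.
Set Implicit Arguments.
Unset Strict Implicit.

Section S.
Variables (A : Type) (R : relset A) (top : A) (meet : A -> A -> A) (gen : rel_on A).
Hypotheses (HD : DCO R) (HC : cartesian R top meet) (HG : generic_fun R meet gen).

Lemma Rid : R (@id_rel A).
Proof. by case: HD => -[]. Qed.
Lemma Rcomp r s : R r -> R s -> R (comp_rel s r).
Proof. by case: HD => -[] _ H _ _; apply: H. Qed.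
Lemma Rincl r s : R r -> (forall a b, s a b -> r a b) -> R s.
Proof. by case: HD => -[] _ _ H _; apply: H. Qed.
Lemma Rsv r : R r -> forall a b b', r a b -> r a b' -> b = b'.
Proof. by case: HD => _ H /H. Qed.

Lemma Rtop : R (fun x y => y = top).
Proof.
case: HC => -[] _ _ H _ _; apply: (Rincl H) => a b ->; by exists a.
Qed.
Lemma Rdiag : R (fun x y => y = meet x x).
Proof.
case: HC => _ [] _ _ H _; apply: (Rincl H) => a b ->; by exists a.
Qed.
Lemma Rprod r s : R r -> R s -> R (fun x y => exists a b c d,
  [/\ r a c, s b d, x = meet a b & y = meet c d]).
Proof.
move=> Hr Hs; case: HC => _ [] _ H _ _.
have /H Hp : prod_up R R (fun x y => r x.1 y.1 /\ s x.2 y.2).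
  by exists r, s; split => // x y [].
apply: (Rincl Hp) => x y [a [b [c [d [Hac Hbd -> ->]]]]].
by exists (a, b), (c, d).
Qed.
Lemma Rfst : R (fun x y => exists b, x = meet y b).
Proof.
case: HC => _ [] _ _ _ [r [s [Hr _ H]]]; apply: (Rincl Hr) => x y [b ->].
have := H (meet y b, meet y b) (y, b); case => //.
by exists (y, b).
Qed.
Lemma Rsnd : R (fun x y => exists a, x = meet a y).
Proof.
case: HC => _ [] _ _ _ [r [s [_ Hs H]]]; apply: (Rincl Hs) => x y [a ->].
have := H (meet a y, meet a y) (a, y); case => //.
by exists (a, y).
Qed.
Lemma Rpair r s : R r -> R s ->
  R (fun x y => exists c d, [/\ r x c, s x d & y = meet c d]).
Proof.
move=> Hr Hs; apply: (Rincl (Rcomp Rdiag (Rprod Hr Hs))) => x y [c [d [H1 H2 ->]]].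
exists (meet x x); split => //; by exists x, x, c, d.
Qed.
Lemma meet_inj a b a' b' : meet a b = meet a' b' -> a = a' /\ b = b'.
Proof.
move=> E; split.
  apply: (Rsv Rfst (a := meet a b)); [by exists b | by rewrite E; exists b'].
apply: (Rsv Rsnd (a := meet a b)); [by exists a | by rewrite E; exists a'].
Qed.
Lemma Rconst e : sharp R top e -> R (fun x y => y = e).
Proof.
move=> He; apply: (Rincl (Rcomp Rtop He)) => x y ->; by exists top.
Qed.
Lemma Rgen : R gen.
Proof. by case: HG. Qed.
Lemma Rapp r s : R r -> R s ->
  R (fun x y => exists a b, [/\ r x a, s x b & gen (meet a b) y]).
Proof.
move=> Hr Hs; apply: (Rincl (Rcomp (Rpair Hr Hs) Rgen)) => x y [a [b [H1 H2 H3]]].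
exists (meet a b); split => //; by exists a, b.
Qed.

Definition W (s : seq A) := foldl meet top s.
Lemma W_rcons s a : W (rcons s a) = meet (W s) a.
Proof. exact: foldl_rcons. Qed.
Lemma W_inj s s' : size s = size s' -> W s = W s' -> s = s'.
Proof.
elim/last_ind: s s' => [|s a IH] s'; case/lastP: s' => [|s' a'] //;
  rewrite ?size_rcons //.
move=> [] Hs; rewrite !W_rcons => /meet_inj [E ->].
by rewrite (IH s').
Qed.

Lemma Rproj n i : i < n ->
  R (fun x c => exists s, [/\ size s = n, x = W s & c = nth top s i]).
Proof.
elim: n i => [//|n IH] i Hi.
case: (ltnP i n) => Hin.
  apply: (Rincl (Rcomp Rfst (IH i Hin))) => x c [s []].
  case/lastP: s => [//|s a]; rewrite size_rcons => -[Hs] -> ->.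
  exists (W s); split; first by rewrite W_rcons; exists a.
  by exists s; rewrite nth_rcons Hs Hin.
have Ein : i = n by apply/eqP; rewrite eqn_leq Hin -ltnS Hi.
apply: (Rincl Rsnd) => x c [s []].
case/lastP: s => [//|s a]; rewrite size_rcons => -[Hs] -> ->.
rewrite W_rcons nth_rcons Hs Ein ltnn eqxx; by exists (W s).
Qed.

Lemma Rn_intro n (r : n.-tuple A -> A -> Prop) t : R t ->
  (forall v c, r v c -> t (wedge_n top meet v) c) -> Rn R top meet r.
Proof.
move=> Ht H.
exists (fun x c => exists v : n.-tuple A, x = wedge_n top meet v /\ r v c); split.
  by apply: (Rincl Ht) => x c [v [-> /H]].
move=> v c; split; first by exists v.
move=> [v' [E Hr]].
have -> : v = v' by apply: val_inj; apply: W_inj E; rewrite !size_tuple.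
done.
Qed.

Lemma partI n (p : poly A n) : coeffs_in (sharp R top) p ->
  exists t, R t /\ forall v c, peval (papp meet gen) v p c -> t (wedge_n top meet v) c.
Proof.
elim: p => [i|a|p IHp q IHq] /=.
- move=> _; exists (fun x c => exists s, [/\ size s = n, x = W s & c = nth top s i]).
  split; first exact: Rproj.
  move=> v c H; inversion H; subst.
  exists v; split => //; first exact: size_tuple.
  exact: tnth_nth.
- move=> Ha; exists (fun x y => y = a); split; first exact: Rconst.
  by move=> v c H; inversion H.
- move=> [/IHp [tp [Hp Hp']] /IHq [tq [Hq Hq']]].
  exists (fun x y => exists a b, [/\ tp x a, tq x b & gen (meet a b) y]).
  split; first exact: Rapp.
  move=> v c H; inversion H; subst.
  by exists a, b; split; [apply: Hp' | apply: Hq' |].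
Qed.


Lemma appn_rcons (app : A -> A -> A -> Prop) e s a c :
  appn app e (rcons s a) c <-> exists d, appn app e s d /\ app d a c.
Proof.
elim: s e => [|x s IH] e /=.
  split; [by move=> [d [H ->]]; exists e | by move=> [d [-> H]]; exists c].
split.
  move=> [d [H1 /IH [d' [H2 H3]]]]; exists d'; split => //; by exists d.
move=> [d [[d' [H1 H2]] H3]]; exists d'; split => //; apply/IH; by exists d.
Qed.

Lemma Qlem n : forall g, R (graph g) -> exists e, sharp R top e /\
  forall s, size s = n -> appn (papp meet gen) e s (g (W s)).
Proof.
elim: n => [|n IH] g Hg.
  exists (g top); split.
    by apply: (Rincl Hg) => x y [-> ->].
  by case.
case: HG => _ /(_ _ Hg) [f [Hf Hfg]].
case: (IH f Hf) => e [He H]; exists e; split => //.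
case/lastP => [//|s a]; rewrite size_rcons => -[Hs].
apply/appn_rcons; exists (f (W s)); split; first exact: H.
rewrite W_rcons; apply: Hfg; done.
Qed.

Lemma partII n (r : n.+1.-tuple A -> A -> Prop) : Rn R top meet r ->
     exists e, sharp R top e /\
       forall (v : n.-tuple A) (b : A),
         (exists d, appn (papp meet gen) e v d) /\
         (forall c, r (rcons_tuple v b) c -> appn (papp meet gen) e (rcons v b) c).
Proof.
case=> s [Hs Hr].
case: HG => _ /(_ _ Hs) [f [Hf Hfs]].
case: (Qlem n Hf) => e [He H]; exists e; split => // v b; split.
  by exists (f (W v)); apply: H; rewrite size_tuple.
move=> c /Hr; rewrite /wedge_n /= -/(W _) W_rcons => /Hfs Hc.
apply/appn_rcons; exists (f (W v)); split => //; apply: H; exact: size_tuple.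
Qed.

End S.

Theorem proposition9p4 (A : Type) (R : relset A) (top : A)
    (meet : A -> A -> A) (gen : rel_on A) :
  DCO R -> cartesian R top meet -> generic_fun R meet gen ->
  (* (i) *)
  (forall (n : nat) (p : poly A n), coeffs_in (sharp R top) p ->
     Rn R top meet (fun v c => peval (papp meet gen) v p c)) /\
  (* (ii) *)
  (forall (n : nat) (r : n.+1.-tuple A -> A -> Prop), Rn R top meet r ->
     exists e, sharp R top e /\
       forall (v : n.-tuple A) (b : A),
         (exists d, appn (papp meet gen) e v d) /\
         (forall c, r (rcons_tuple v b) c -> appn (papp meet gen) e (rcons v b) c)) /\
  (* (iii) *)
  (weak_rpca (papp meet gen) (sharp R top) /\
   forall r : rel_on A,
     R r <-> exists e, sharp R top e /\ rel_incl r (papp meet gen e)).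
Proof.
move=> HD HC HG.
have P1 : forall (n : nat) (p : poly A n), coeffs_in (sharp R top) p ->
     Rn R top meet (fun v c => peval (papp meet gen) v p c).
  move=> n p /(partI HD HC HG) [t [Ht H]]; exact: (Rn_intro HD HC Ht H).
have P2 := partII HD HG.
split; first exact: P1. split; first exact: P2. split.
  split.
  - move=> a b c c'; apply: (Rsv HD (Rgen HG)).
  - move=> a b c Ha Hb Hc.
    apply: (Rincl HD (Rcomp HD (Rpair HD HC Ha Hb) (Rgen HG))) => x y [-> ->].
    exists (meet a b); split => //; by exists a, b.
    have [k [Hk Hk']] := P2 top 1 _ (P1 2 (PVar A (@Ordinal 2 0 isT)) I).
    have [s [Hs Hs']] := P2 top 2 _ (P1 3 (PApp (PApp (PVar A (@Ordinal 3 0 isT)) (PVar A (@Ordinal 3 2 isT)))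
                        (PApp (PVar A (@Ordinal 3 1 isT)) (PVar A (@Ordinal 3 2 isT)))) (conj (conj I I) (conj I I))).
    exists k, s; split => // a b c; split.
    + have [_ H] := Hk' [tuple a] b; apply: H.
      exact: (ev_var _ (rcons_tuple [tuple a] b) (@Ordinal 2 0 isT)).
    + by have [H _] := Hs' [tuple a; b] a.
    + move=> u w x Hu Hw Hx.
      have [_ H] := Hs' [tuple a; b] c; apply: H.
      apply: (ev_app (a := u) (b := w)) => //.
        apply: (ev_app (a := a) (b := c)) => //.
          exact: (ev_var _ (rcons_tuple [tuple a; b] c) (@Ordinal 3 0 isT)).
        exact: (ev_var _ (rcons_tuple [tuple a; b] c) (@Ordinal 3 2 isT)).
      apply: (ev_app (a := b) (b := c)) => //.
        exact: (ev_var _ (rcons_tuple [tuple a; b] c) (@Ordinal 3 1 isT)).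
      exact: (ev_var _ (rcons_tuple [tuple a; b] c) (@Ordinal 3 2 isT)).
move=> r; split.
  move=> Hr.
  have Hr' : R (comp_rel r (fun x y => exists a, x = meet a y)) := Rcomp HD (Rsnd HD HC) Hr.
  case: HG => _ /(_ _ Hr') [f [Hf Hfr]].
  exists (f top); split.
    by apply: (Rincl HD Hf) => x y [-> ->].
  move=> x c Hxc; apply: Hfr; exists x; split => //; by exists top.
move=> [e [He Hr]].
apply: (Rincl HD (Rcomp HD (Rpair HD HC (Rconst HD HC He) (Rid HD)) (Rgen HG))) => x y /Hr H.
exists (meet e x); split => //; by exists e, x.
Qed.
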